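(* Let $\mathcal{A}$ be a subring of the algebraic integers which is closed under complex conjugation. Let $\{\mathcal{W}_i\}_{i=1}^n$ be an equiisoclinic tight fusion frame consisting of $n$ subspaces of dimension $m$ of $\mathbb{F}^k$ ($\mathbb{F}=\mathbb{R}$ or $\mathbb{C}$). For each $i\in[n]$ fix an orthonormal basis of $\mathcal{W}_i$ and let $L_i$ be the $k\times m$ matrix with these basis vectors as columns. If for all $i\in[n]$ the entries of $\sqrt{k}L_i$ lie in $\mathcal{A}$, then \[ \frac{k(mn-k)}{n-1}\in\mathbb{Z}. \]
   Context: The algebraic integers are the complex roots of monic polynomials with integer coefficients. A collection of $m$-dimensional subspaces $\{\mathcal{W}_i\}_{i=1}^n$ of $\mathbb{F}^k$ with orthogonal projections $P_i=L_iL_i^*$ is a tight fusion frame if $\sum_iP_i=AI_k$ for some $A>0$. It is equiisoclinic if there is $\alpha>0$ with $L_i^*L_jL_j^*L_i=\alpha I_m$ for all $i\ne j$ (this does not depend on the choice of orthonormal bases). *)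

(* Defs.v *)
From HB Require Import structures.
From mathcomp Require Import all_boot all_order all_algebra all_field.
Set Implicit Arguments. Unset Strict Implicit. Unset Printing Implicit Defensive.
Import Order.TTheory GRing.Theory Num.Theory.
Local Open Scope ring_scope.

Definition adjmx (p q : nat) (L : 'M[algC]_(p, q)) : 'M[algC]_(q, p) :=
  (map_mx Num.conj L)^T.

Definition orthonormal_cols (k m : nat) (L : 'M[algC]_(k, m)) : Prop :=
  adjmx L *m L = 1%:M.

Definition tight_fusion_frame (n k m : nat) (L : 'I_n -> 'M[algC]_(k, m)) : Prop :=
  exists2 A : algC, 0 < A & \sum_(i < n) (L i *m adjmx (L i)) = A%:M.

Definition equiisoclinic (n k m : nat) (L : 'I_n -> 'M[algC]_(k, m)) : Prop :=
  exists2 alpha : algC, 0 < alpha &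
    forall i j : 'I_n, i != j ->
      adjmx (L i) *m L j *m adjmx (L j) *m L i = alpha%:M.

(* Main.v *)
Require Import Defs.
From HB Require Import structures.
From mathcomp Require Import all_boot all_order all_algebra all_field.
From mathcomp Require Import algnum ring.
Import Order.TTheory GRing.Theory Num.Theory.
Local Open Scope ring_scope.

Lemma sum_in (S : {pred algC}) (HS : subring_closed S) (I : Type) (r : seq I)
  (P : pred I) (F : I -> algC) :
  (forall i, P i -> F i \in S) -> \sum_(i <- r | P i) F i \in S.
Proof.
case: HS => h1 hB hM HF.
have h0 : 0 \in S by rewrite -(subrr 1); apply: (hB).
apply: (big_ind (fun x => x \in S)) => //.
move=> x y hx hy.
have -> : x + y = x - (0 - y) by rewrite sub0r opprK.
by apply: (hB) => //; apply: (hB).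
Qed.

Lemma mul_in (S : {pred algC}) (HS : subring_closed S) p q r
  (A : 'M[algC]_(p, q)) (B : 'M[algC]_(q, r)) :
  (forall a b, A a b \in S) -> (forall a b, B a b \in S) ->
  forall a b, (A *m B) a b \in S.
Proof.
move=> hA hB a b; rewrite mxE; apply: sum_in => // j _.
by case: HS => _ _ hM; apply: hM.
Qed.

Lemma adjmxZ p q (s : algC) (L : 'M[algC]_(p, q)) :
  adjmx (s *: L) = s^* *: adjmx L.
Proof. by apply/matrixP => a b; rewrite !mxE rmorphM. Qed.

Theorem mainTheorem4
  (Asub : {pred algC})
  (HAring : subring_closed Asub)
  (HAint : {subset Asub <= Aint})
  (HAconj : {in Asub, forall x, x^* \in Asub})
  (n m k : nat) (Hn : (1 < n)%N) (L : 'I_n -> 'M[algC]_(k, m))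
  (Horth : forall i, orthonormal_cols (L i))
  (Htight : tight_fusion_frame L)
  (Heqi : equiisoclinic L)
  (Hent : forall (i : 'I_n) (r : 'I_k) (c : 'I_m), sqrtC k%:R * L i r c \in Asub) :
  exists z : int,
    k%:R * (m%:R * n%:R - k%:R) / (n%:R - 1) = z%:~R :> algC.
Proof.
case: (posnP k) => [k0 | kpos].
  by exists 0; rewrite k0 !mul0r.
case: Htight => A Apos HA.
case: Heqi => al alpos Hal.
have n1 : (n%:R - 1 : algC) != 0.
  by rewrite subr_eq0 -[1]/(1%:R) eqr_nat; apply/eqP => h; rewrite h in Hn.
have Htr : A * k%:R = n%:R * m%:R.
  have := congr1 mxtrace HA.
  rewrite mxtrace_scalar raddf_sum /=.
  under eq_bigr => i _ do rewrite mxtrace_mulC Horth mxtrace1.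
  rewrite sumr_const card_ord.
  have e : forall x y : nat, (x%:R *+ y : algC) = y%:R * x%:R by move=> x y; rewrite mulr_natl.
  by move=> h; rewrite mulr_natr -h e.
have mpos : (0 < m)%N.
  rewrite lt0n; apply/negP => /eqP m0.
  move: Htr; rewrite m0 mulr0 => /eqP; rewrite mulf_eq0 pnatr_eq0 eqn0Ngt kpos orbF.
  by move/eqP => A0; rewrite A0 ltxx in Apos.
pose i0 : 'I_n := Ordinal (ltnW Hn).
pose j0 : 'I_n := Ordinal Hn.
have ij : i0 != j0 by [].
have HAal : A = 1 + al * (n%:R - 1).
  have := congr1 (fun M => adjmx (L i0) *m M *m L i0) HA.
  rewrite /= mulmx_sumr mulmx_suml (bigD1 i0) //=.
  rewrite (eq_bigr (fun _ => al%:M)); last by move=> j hj; rewrite !mulmxA Hal // eq_sym.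
  rewrite mulmxA -mulmxA !(Horth i0) mul1mx mul_mx_scalar -scalemxAl (Horth i0) scalemx1.
  rewrite sumr_const cardC1 card_ord -raddfMn -raddfD /=.
  move=> /(congr1 (fun M : 'M[algC]_m => M (Ordinal mpos) (Ordinal mpos))); rewrite !mxE eqxx /=.
  rewrite !mulr1n => <-.
  have -> : (n%:R - 1 : algC) = (n.-1)%:R by rewrite -{1}(prednK (ltnW Hn)) mulrSr addrK.
  by rewrite mulr_natr.
pose s := sqrtC (k%:R : algC).
have hs : s^* = s by apply: geC0_conj; rewrite sqrtC_ge0 ler0n.
have hs2 : s * s = k%:R by rewrite -expr2 sqrtCK.
have hB : forall i a b, (s *: L i) a b \in Asub by move=> i a b; rewrite mxE Hent.
have hBa : forall i a b, (s *: adjmx (L i)) a b \in Asub.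
  by move=> i a b; rewrite !mxE -{1}hs -rmorphM; apply: HAconj; apply: Hent.
have Hk2 : k%:R ^+ 2 * al \in Asub.
  have := @mul_in Asub HAring _ _ _ _ _ (@mul_in Asub HAring _ _ _ _ _ (@mul_in Asub HAring _ _ _ _ _ (hBa i0) (hB j0)) (hBa j0)) (hB i0)
     (Ordinal mpos) (Ordinal mpos).
  have eqM : s *: adjmx (L i0) *m (s *: L j0) *m (s *: adjmx (L j0)) *m (s *: L i0)
     = (k%:R ^+ 2 * al)%:M.
    do 3 rewrite -?scalemxAl -?scalemxAr.
    rewrite !scalerA Hal // scale_scalar_mx; congr (_%:M).
    by rewrite -hs2 expr2 !mulrA.
  by rewrite eqM mxE eqxx.
have E : k%:R * (m%:R * n%:R - k%:R) / (n%:R - 1) = k%:R ^+ 2 * al.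
  apply: (mulIf n1); rewrite mulfVK //.
  rewrite HAal in Htr.
  rewrite [m%:R * _]mulrC -Htr; ring.
have hQ : k%:R * (m%:R * n%:R - k%:R) / (n%:R - 1) \in Crat.
  apply: rpred_div; first (apply: rpredM; first exact: rpred_nat).
    by apply: rpredB; [apply: rpredM; apply: rpred_nat | apply: rpred_nat].
  by apply: rpredB; [apply: rpred_nat | apply: rpred1].
have hA : k%:R * (m%:R * n%:R - k%:R) / (n%:R - 1) \in Aint by rewrite E; apply: HAint.
have hZ := Cint_rat_Aint hQ hA.
by case/intrP: hZ => z hz; exists z.
Qed.
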